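(* Let $E$ be a reflexive, strictly convex Banach space and $C$ a closed convex subset of $E$. Suppose that $\mathcal{S}=\{T_s:s\in S\}$ is a representation of a semigroup $S$ on $C$ by nonexpansive self-mappings. Then the following are equivalent: (1) there is a closed, $S$-invariant convex subset $C_0$ of $C$ such that $A_{C_0}(\mathcal{S})\neq\emptyset$; (2) $S$ has a common fixed point in $C$.
   Context: A representation of a semigroup $S$ on $C$ is a family of maps $T_s:C\to C$ with $T_{st}=T_s\circ T_t$ for $s,t\in S$; it is nonexpansive if $\|T_sx-T_sy\|\le\|x-y\|$ for all $s\in S$, $x,y\in C$. A subset $C_0\subseteq C$ is $S$-invariant if $T_s(C_0)\subseteq C_0$ for all $s$. For a subset $D\subseteq C$, $A_D(\mathcal{S})$ is the set of all $a\in E$ with $\|a-T_sx\|\le\|a-x\|$ for all $x\in D$, $s\in S$ (attractive points for $D$). A common fixed point is $x\in C$ with $T_sx=x$ for all $s\in S$. *)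

(* Defs.v *)
From HB Require Import structures.
From mathcomp Require Import all_boot all_order all_algebra.
From mathcomp Require Import all_classical all_reals all_analysis.
Set Implicit Arguments. Unset Strict Implicit. Unset Printing Implicit Defensive.
Import Order.TTheory GRing.Theory Num.Theory.
Import numFieldNormedType.Exports.
Local Open Scope classical_set_scope.
Local Open Scope ring_scope.

Definition lin_functional (R : realType) (E : normedModType R) (f : E -> R) :=
  forall (a : R) (x y : E), f (a *: x + y) = a * f x + f y.

Definition dual_elt (R : realType) (E : normedModType R) (f : E -> R) :=
  lin_functional f /\ continuous f.

(* Reflexive: the canonical embedding J : E -> E^** is surjective, i.e. every
   bounded linear functional phi on E^* (with its operator norm) is evaluation
   at some x in E.  "|phi f| <= M * ||f||_op" is written as
   "for every c with |f x| <= c ||x|| for all x, |phi f| <= M c". *)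
Definition reflexive_space (R : realType) (E : normedModType R) :=
  forall phi : (E -> R) -> R,
    (forall (a : R) (f g : E -> R), dual_elt f -> dual_elt g ->
        phi (fun x => a * f x + g x) = a * phi f + phi g) ->
    (exists M : R, forall f : E -> R, dual_elt f ->
        forall c : R, (forall x, `|f x| <= c * `|x|) -> `|phi f| <= M * c) ->
    exists x0 : E, forall f : E -> R, dual_elt f -> phi f = f x0.

Definition strictly_convex_space (R : realType) (E : normedModType R) :=
  forall x y : E, `|x| = 1 -> `|y| = 1 -> x != y -> `|(2^-1 : R) *: (x + y)| < 1.

Definition convex_subset (R : realType) (E : normedModType R) (A : set E) :=
  forall (x y : E) (t : R), A x -> A y -> 0 <= t -> t <= 1 ->
    A (t *: x + (1 - t) *: y).

Definition attractive_points (R : realType) (E : normedModType R) (S : Type)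
    (T : S -> E -> E) (D : set E) : set E :=
  [set a | forall x s, D x -> `|a - T s x| <= `|a - x|].

(* Main.v *)
Set Implicit Arguments. Unset Strict Implicit. Unset Printing Implicit Defensive.
Require Import Defs.
From HB Require Import structures.
From mathcomp Require Import all_boot all_order all_algebra.
From mathcomp Require Import all_classical all_reals all_analysis.
From mathcomp Require Import lra ring.
Import Order.TTheory GRing.Theory Num.Theory.
Import numFieldNormedType.Exports.
Local Open Scope classical_set_scope.
Local Open Scope ring_scope.

Definition pgraph (R : realType) (E : lmodType R) (q : E -> R) (G : set (E * R)) :=
  [/\ (forall x r r', G (x, r) -> G (x, r') -> r = r'),
      (forall (a : R) x y r s, G (x, r) -> G (y, s) -> G (a *: x + y, a * r + s)) &
      (forall x r, G (x, r) -> r <= q x)].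

Lemma pgraph_chain (R : realType) (E : lmodType R) (q : E -> R) (F : set (set (E * R))) :
  F `<=` pgraph q -> total_on F subset -> pgraph q (\bigcup_(X in F) X).
Proof.
move=> FP tot; split.
- move=> x r r' [X FX Xr] [Y FY Yr].
  have [XY|YX] := tot _ _ FX FY.
  + by case: (FP _ FY) => fY _ _; apply: fY (XY _ Xr) Yr.
  + by case: (FP _ FX) => fX _ _; apply: fX Xr (YX _ Yr).
- move=> a x y r s [X FX Xr] [Y FY Yr].
  have [XY|YX] := tot _ _ FX FY.
  + by exists Y => //; case: (FP _ FY) => _ lY _; apply: lY (XY _ Xr) Yr.
  + by exists X => //; case: (FP _ FX) => _ lX _; apply: lX Xr (YX _ Yr).
- by move=> x r [X FX Xr]; case: (FP _ FX) => _ _; apply.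
Qed.

Lemma hb_convex (R : realType) (E : lmodType R) (q : E -> R) :
  (forall x y (t : R), 0 <= t -> t <= 1 ->
     q (t *: x + (1 - t) *: y) <= t * q x + (1 - t) * q y) ->
  0 <= q 0 ->
  exists F : E -> R, (forall (a : R) x y, F (a *: x + y) = a * F x + F y) /\
                     forall x, F x <= q x.
Proof.
move=> qconv q0.
have [A [PA Amax]] := Zorn_bigcup (@pgraph_chain R E q).
case: PA => Afun Alin Adom.
have A00 : A (0, 0).
  apply: contrapT => nA0.
  have [[[x r] Axr]|A0] := pselect (exists p, A p).
  - apply: nA0; have := Alin (-1) x x r r Axr Axr.
    by rewrite scaleN1r mulN1r !addNr.
  - suff [h1 h2] : A `<` [set (0, 0)] /\ pgraph q [set (0, 0)].
      exact: Amax _ h1 h2.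
    split.
    + split; first by move=> p Ap; exfalso; apply: A0; exists p.
      by move=> /(_ (0,0) erefl).
    + split.
      * by move=> x r r' [_ ->] [_ ->].
      * by move=> a x y r s [-> ->] [-> ->]; rewrite scaler0 mulr0 !addr0.
      * by move=> x r [-> ->].
have Atot v : exists r, A (v, r).
  apply: contrapT => nv.
  have key m r s m' r' t : A (m, r) -> 0 < s -> A (m', r') -> 0 < t ->
     (r - q (m - s *: v)) / s <= (q (m' + t *: v) - r') / t.
    move=> Amr s0 Am'r' t0.
    pose k := (s + t)^-1.
    have k0 : 0 < k by rewrite invr_gt0; lra.
    have e1 : 1 - t * k = s * k.
      by rewrite /k; field; apply/eqP; lra.
    have Aw := Alin (t * k) m ((s * k) *: m') r (s * k * r') Amr.
    have := Alin (s * k) m' 0 r' 0 Am'r' A00; rewrite !addr0 => /Aw {}Aw.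
    have := Adom _ _ Aw.
    have -> : (t * k) *: m + (s * k) *: m' =
       (t * k) *: (m - s *: v) + (1 - t * k) *: (m' + t *: v).
      rewrite e1 !scalerDr !scalerN !scalerA.
      rewrite [s * k * t]mulrAC [t * k * s]mulrAC [t * s]mulrC.
      by rewrite addrACA addNr addr0.
    have tk0 : 0 <= t * k by rewrite mulr_ge0 // ltW.
    have sk0 : 0 < s * k by rewrite mulr_gt0.
    have tk1 : t * k <= 1 by rewrite -subr_ge0 e1 ltW.
    move=> /le_trans /(_ (qconv _ _ _ tk0 tk1)).
    rewrite e1 => H.
    have H2 : t * r + s * r' <= t * q (m - s *: v) + s * q (m' + t *: v).
      rewrite -(ler_pM2l k0); rewrite !mulrDr.
      by rewrite ![k * (_ * _)]mulrA ![k * _]mulrC.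
    rewrite ler_pdivrMr // mulrAC ler_pdivlMr //.
    nra.
  pose L := [set l | exists m r s, [/\ A (m, r), 0 < s & l = (r - q (m - s *: v)) / s]].
  have L0 : L !=set0 by exists ((0 - q (0 - 1 *: v)) / 1); exists 0, 0, 1.
  pose c := sup L.
  have cle m' r' t : A (m', r') -> 0 < t -> c <= (q (m' + t *: v) - r') / t.
    move=> ? ?; apply: ge_sup => // _ [m [r [s [Amr s0 ->]]]]; exact: key.
  have lec m r s : A (m, r) -> 0 < s -> (r - q (m - s *: v)) / s <= c.
    move=> ? ?; apply: sup_upper_bound; last by exists m, r, s.
    split => //; exists ((q (0 + 1 *: v) - 0) / 1) => _ [m0 [r0 [s0 [? ? ->]]]].
    exact: key.
  pose B := [set p | exists m r t, A (m, r) /\ p = (m + t *: v, r + t * c)].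
  suff [h1 h2] : A `<` B /\ pgraph q B by exact: Amax _ h1 h2.
  split.
  - split.
    + move=> [x r] Axr; exists x, r, 0; split => //.
      by rewrite scale0r mul0r !addr0.
    + move=> BA; apply: nv; exists c; apply: BA; exists 0, 0, 1; split => //.
      by rewrite add0r scale1r add0r mul1r.
  - split.
    + move=> x r r' [m [u [t [Amu [-> ->]]]]] [m' [u' [t' [Amu' [e2 ->]]]]].
      have tt' : t = t'.
        apply: contrapT => /eqP ntt'.
        apply: nv; exists ((t' - t)^-1 * (u - u')).
        have := Alin (-1) m' m u' u Amu' Amu.
        move=> /(Alin ((t' - t)^-1) _ 0 _ 0)/(_ A00); rewrite !addr0.
        have -> : (-1) *: m' + m = (t' - t) *: v.
          have -> : m = m' + t' *: v - t *: v by rewrite -e2 addrK.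
          by rewrite scaleN1r addrA addKr scalerBl.
        rewrite scalerA mulVf ?scale1r; last by rewrite subr_eq0 eq_sym.
        by rewrite mulN1r [- u' + u]addrC.
      subst t'.
      have mm' : m = m' by move/addIr: e2.
      subst m'.
      by rewrite (Afun _ _ _ Amu Amu').
    + move=> a x y r s [m [u [t [Amu [-> ->]]]]] [m' [u' [t' [Amu' [-> ->]]]]].
      exists (a *: m + m'), (a * u + u'), (a * t + t'); split; first exact: Alin.
      congr (_, _); last by ring.
      rewrite !scalerDr !scalerDl scalerA.
      by rewrite addrACA.
    + move=> x r [m [u [t [Amu [-> ->]]]]].
      have [t0|t0|->] := ltrgt0P t.
      * have := cle _ _ _ Amu t0; rewrite ler_pdivlMr // => h.
        rewrite mulrC; lra.
      * have := lec _ _ (- t) Amu; rewrite oppr_gt0 => /(_ t0).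
        rewrite scaleNr opprK ler_pdivrMr ?oppr_gt0 // => h.
        rewrite mulrC; lra.
      * by rewrite scale0r mul0r !addr0; apply: Adom.
pose F x := xget 0 [set r | A (x, r)].
have FA x : A (x, F x) by exact: (@xgetPex R 0 [set r | A (x, r)] (Atot x)).
exists F; split.
- move=> a x y; exact: Afun (FA _) (Alin _ _ _ _ _ (FA x) (FA y)).
- move=> x; exact: Adom (FA x).
Qed.

Lemma lin_props (R : realType) (E : normedModType R) (F : E -> R) :
  (forall (a : R) x y, F (a *: x + y) = a * F x + F y) ->
  [/\ F 0 = 0, forall x y, F (x + y) = F x + F y, forall x, F (- x) = - F x &
     forall (a : R) x, F (a *: x) = a * F x].
Proof.
move=> lF.
have F0 : F 0 = 0.
  have := lF 1 0 0; rewrite scale1r addr0 mul1r => h.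
  by apply: (addrI (F 0)); rewrite addr0 -h.
have FZ a x : F (a *: x) = a * F x by rewrite -[a *: x]addr0 lF F0 addr0.
have FD x y : F (x + y) = F x + F y by rewrite -{1}[x]scale1r lF mul1r.
split => // x; by rewrite -scaleN1r FZ mulN1r.
Qed.

Lemma lin_cont (R : realType) (E : normedModType R) (F : E -> R) (M : R) :
  (forall (a : R) x y, F (a *: x + y) = a * F x + F y) ->
  (forall x, `|F x| <= M * `|x|) -> continuous F.
Proof.
move=> lF hM x.
have [F0 FD FN FZ] := lin_props lF.
apply/cvgrPdist_le => e e0; apply/nbhs_normP.
have M1 : 0 < `|M| + 1 by rewrite ltr_wpDl.
exists (e / (`|M| + 1)) => /=; first by rewrite divr_gt0.
move=> y /= hy.
have -> : F x - F y = F (x - y) by rewrite FD FN.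
apply: (le_trans (hM _)).
apply: (le_trans (ler_wpM2r (normr_ge0 _) (ler_norm M))).
apply: (le_trans (ler_wpM2r (normr_ge0 _) (ler_wpDr ler01 (lexx `|M|)))).
rewrite mulrC -ler_pdivlMr //; exact: ltW.
Qed.

Lemma dual_bounded (R : realType) (E : normedModType R) (f : E -> R) :
  dual_elt f -> exists c, 0 <= c /\ forall x, `|f x| <= c * `|x|.
Proof.
case=> lf cf.
have [f0 fD fN fZ] := lin_props lf.
have /cvgrPdist_lt /(_ 1 ltr01) /nbhs_normP [d /= d0 hd] := cf 0.
exists (2 / d); split; first by rewrite divr_ge0 // ltW.
move=> x; have [->|x0] := eqVneq x 0; first by rewrite f0 !normr0 mulr0.
have nx0 : 0 < `|x| by rewrite normr_gt0.
pose y := (d / (2 * `|x|)) *: x.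
have : `|0 - f y| < 1.
  rewrite -{1}f0; apply: hd; rewrite /= sub0r normrN /y normrZ ger0_norm; last first.
    by rewrite divr_ge0 // ltW // mulr_gt0.
  rewrite invfM -!mulrA mulVf ?gt_eqF // mulr1.
  by rewrite gtr_pMr // invf_lt1 // ltr1n.
rewrite sub0r normrN /y fZ normrM ger0_norm; last first.
  by rewrite divr_ge0 // ltW // mulr_gt0.
move=> h.
have h3 : d * `|f x| <= 2 * `|x|.
  move: h; rewrite mulrAC ltr_pdivrMr ?mulr_gt0 // mul1r; exact: ltW.
rewrite -(ler_pM2l d0) mulrA mulrCA mulfV ?gt_eqF // mulr1 //.
Qed.

Lemma zmod_shuffle (V : zmodType) (a b c d e f : V) :
  a + b + (c + d) - (e + f) = (a + c - e) + (b + d - f).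
Proof. by rewrite addrACA opprD (addrACA (a + c) (b + d) (- e) (- f)). Qed.

Lemma separation (R : realType) (E : normedModType R) (K : set E) (x0 : E) (r : R) :
  convex_subset K -> K !=set0 -> 0 < r -> (forall y, K y -> r <= `|y - x0|) ->
  exists F, dual_elt F /\ forall y, K y -> F y <= F x0 - r.
Proof.
move=> cK [y0 Ky0] r0 hr.
pose D (w : E) := [set `|w + x0 - y| | y in K].
have D0 w : D w !=set0 by exists `|w + x0 - y0|, y0.
have Dlb w : has_lbound (D w) by exists 0 => _ [y _ <-].
have hinf w : has_inf (D w) by split.
pose q w := inf (D w) - r.
have qle w y : K y -> q w <= `|w + x0 - y| - r.
  by move=> Ky; rewrite lerD2r; apply: ge_inf => //; exists y.
have qconv : forall w1 w2 (t : R), 0 <= t -> t <= 1 ->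
    q (t *: w1 + (1 - t) *: w2) <= t * q w1 + (1 - t) * q w2.
  move=> w1 w2 t t0 t1; rewrite /q.
  suff : inf (D (t *: w1 + (1 - t) *: w2)) <= t * inf (D w1) + (1 - t) * inf (D w2).
    move=> h; have -> : t * (inf (D w1) - r) + (1 - t) * (inf (D w2) - r) =
       t * inf (D w1) + (1 - t) * inf (D w2) - r by ring.
    by rewrite lerD2r.
  apply/ler_addgt0Pr => e e0.
  have [_ [y1 Ky1 <-] h1] := inf_adherent e0 (hinf w1).
  have [_ [y2 Ky2 <-] h2] := inf_adherent e0 (hinf w2).
  have Ky := cK y1 y2 t Ky1 Ky2 t0 t1.
  have := ge_inf (Dlb (t *: w1 + (1 - t) *: w2)) (ex_intro2 _ _ _ Ky erefl).
  move=> /le_trans; apply.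
  have hx0 : x0 = t *: x0 + (1 - t) *: x0 by rewrite -scalerDl addrC subrK scale1r.
  rewrite {1}hx0 zmod_shuffle -!scalerDr -!scalerBr.
  apply: (le_trans (ler_normD _ _)); rewrite !normrZ !ger0_norm ?subr_ge0 //.
  have t1' : 0 <= 1 - t by rewrite subr_ge0.
  have := ler_wpM2l t0 (ltW h1); have := ler_wpM2l t1' (ltW h2).
  lra.
have q0 : 0 <= q 0.
  rewrite subr_ge0; apply: lb_le_inf => // _ [y Ky <-].
  by rewrite add0r distrC; apply: hr.
have [F [lF Fq]] := hb_convex qconv q0.
have [F0 FD FN FZ] := lin_props lF.
exists F; split; last first.
  move=> y Ky; have := le_trans (Fq (y - x0)) (qle _ _ Ky).
  rewrite subrK subrr normr0 sub0r FD FN.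
  lra.
split => //.
pose c0 := `|x0 - y0|.
have Fb w : F w <= `|w| + c0.
  apply: (le_trans (Fq w)); apply: (le_trans (qle _ _ Ky0)).
  have : `|w + x0 - y0| <= `|w| + c0 by rewrite -(addrA w) ler_normD.
  lra.
apply: (@lin_cont _ _ _ (1 + c0)) => // w.
have [->|w0] := eqVneq w 0; first by rewrite F0 !normr0 mulr0.
have nw0 : 0 < `|w| by rewrite normr_gt0.
pose u := `|w|^-1 *: w.
have nu : `|u| = 1 by rewrite normrZ ger0_norm ?invr_ge0 // mulVf ?gt_eqF.
have wE : w = `|w| *: u by rewrite scalerA mulfV ?gt_eqF // scale1r.
rewrite {1}wE FZ normrM ger0_norm // mulrC ler_wpM2r //.
rewrite ler_norml; have := Fb u; have := Fb (- u); rewrite FN normrN nu.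
lra.
Qed.

Lemma ultra_bounded_cvg (R : realType) (U : set_system nat) (g : nat -> R) (B : R) :
  UltraFilter U -> (forall n, `|g n| <= B) -> g @ U --> lim (g @ U).
Proof.
move=> UU gB.
have UP : ProperFilter U by apply: ultra_proper.
have hU : U [set n | g n \in `[- B, B]].
  by apply: (filterS _ filterT) => n _ /=; rewrite in_itv /= -ler_norml.
have [p [_ clp]] := @segment_compact R (- B) B (g @ U) _ hU.
suff gp : g @ U --> p by rewrite (cvg_lim _ gp).
move=> N Np.
have [//|UC] := in_ultra_setVsetC (g @^-1` N) UU.
have [z [zC zN]] := clp (~` N) N UC Np.
by exfalso; apply: zC.
Qed.

Lemma nearest_point (R : realType) (E : normedModType R) (C0 : set E) (a : E) :
  reflexive_space E -> C0 !=set0 -> closed C0 -> convex_subset C0 ->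
  exists z, C0 z /\ forall y, C0 y -> `|a - z| <= `|a - y|.
Proof.
move=> refl [y0 Cy0] cC0 convC0.
pose D := [set `|a - y| | y in C0].
have Dlb : has_lbound D by exists 0 => _ [y _ <-].
have hinf : has_inf D by split => //; exists `|a - y0|, y0.
pose d := inf D.
have d0 : 0 <= d by apply: lb_le_inf => [|_ [y _ <-]] //; exists `|a - y0|, y0.
have hx n : exists y, C0 y /\ `|a - y| < d + n.+1%:R^-1.
  have np : 0 < n.+1%:R^-1 :> R by rewrite invr_gt0.
  have [_ [y Cy <-] h] := inf_adherent np hinf.
  by exists y.
have [x hxn] := choice hx.
have [U [UU sU]] := ultraFilterLemma (eventually_filter : ProperFilter (\oo : set_system nat)).
have UP : ProperFilter U by apply: ultra_proper.
have FU : Filter U := @filter_filter _ U UP.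
pose B := `|a| + d + 1.
have xB n : `|x n| <= B.
  have [_ h] := hxn n.
  have h1 : n.+1%:R^-1 <= 1 :> R by rewrite invf_le1 // ler1n.
  have : `|x n| <= `|a| + `|a - x n|.
    have e : x n = a - (a - x n) by rewrite opprB addrCA subrr addr0.
    by rewrite {1}e; apply: ler_normB.
  move: h h1; rewrite /B; generalize (n.+1%:R^-1 : R) => e; lra.
pose phi (f : E -> R) := lim ((fun n => f (x n)) @ U).
have phicvg f : dual_elt f -> (fun n => f (x n)) @ U --> phi f.
  move=> /dual_bounded [c [c0 hc]].
  apply: (@ultra_bounded_cvg _ _ _ (c * B)) => // n.
  by apply: (le_trans (hc _)); rewrite ler_wpM2l.
have [x0 hx0] : exists x0 : E, forall f : E -> R, dual_elt f -> phi f = f x0.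
  apply: (refl phi).
  - move=> a' f g df dg.
    have h := cvgD (FF := FU) (cvgM (FF := FU) (cvg_cst (FF := FU) a') (phicvg f df)) (phicvg g dg).
    have h' : (fun n => a' * f (x n) + g (x n)) @ U --> a' * phi f + phi g := h.
    apply: (cvg_lim _ h'); exact: norm_hausdorff.
  - pose L := lim ((fun n => `|x n|) @ U).
    have xL : (fun n => `|x n|) @ U --> L.
      by apply: (@ultra_bounded_cvg _ _ _ B) => // n; rewrite normr_id; exact: xB.
    exists L => f df c hc.
    have h := cvgB (FF := FU) (cvgMr_tmp (FF := FU) (b := c) xL) (cvg_norm (FF := FU) (phicvg f df)).
    have hn : U [set n | 0 <= `|x n| * c - `|f (x n)|].
      by apply: (filterS _ filterT) => n _ /=; rewrite subr_ge0 mulrC; exact: hc.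
    have := @closed_cvg nat R U UP
      ((fun n => `|x n| * c) - (fun n => `|f (x n)|)) _ (@closed_ge R 0) hn _ h.
    by rewrite /= subr_ge0 mulrC.
have inK (K : set E) (r : R) : convex_subset K -> 0 < r ->
    (forall y, K y -> r <= `|y - x0|) -> (\forall n \near \oo, K (x n)) -> False.
  move=> cK r0 hr evK.
  have [n Kn] : exists n, K (x n) by case: evK => k _ hk; exists k; apply: hk => /=.
  have [F [dF hF]] := separation cK (ex_intro _ (x n) Kn) r0 hr.
  have hU : U [set n | F (x n) <= F x0 - r].
    by apply: (filterS _ (sU _ evK)) => m /= /hF.
  have := @closed_cvg nat R U UP (fun n => F (x n)) _ (@closed_le R (F x0 - r)) hU _
    (phicvg F dF).
  rewrite /= hx0 //; lra.
have Cx0 : C0 x0.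
  apply: contrapT => nC.
  have op : open (~` C0) by rewrite openC.
  have := @open_nbhs_nbhs _ x0 (~` C0) (conj op nC).
  move=> /nbhs_normP [r /= r0 hr].
  apply: (inK C0 r convC0 r0).
  - move=> y Cy; rewrite leNgt; apply/negP => h; apply: (hr y) => //=.
    by rewrite distrC.
  - by apply: nearW => n; case: (hxn n).
have ax0 : `|a - x0| <= d.
  rewrite leNgt; apply/negP => hlt.
  pose e := (`|a - x0| - d) / 2.
  have e0 : 0 < e by rewrite divr_gt0 // subr_gt0.
  pose k := Num.trunc (e^-1).
  have hk : k.+1%:R^-1 < e.
    by rewrite invf_plt ?posrE // ?invr_gt0 //; exact: truncnS_gt.
  apply: (inK [set y | `|a - y| <= d + e] e _ e0).
  - move=> y1 y2 t /= h1 h2 t0 t1.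
    have ha : a = t *: a + (1 - t) *: a by rewrite -scalerDl addrC subrK scale1r.
    rewrite {1}ha opprD addrACA -!scalerBr.
    apply: (le_trans (ler_normD _ _)); rewrite !normrZ !ger0_norm ?subr_ge0 //.
    have t1' : 0 <= 1 - t by rewrite subr_ge0.
    have := ler_wpM2l t0 h1; have := ler_wpM2l t1' h2.
    lra.
  - move=> y /= hy.
    have : `|a - x0| <= `|a - y| + `|y - x0|.
      have -> : a - x0 = (a - y) + (y - x0) by rewrite addrA subrK.
      exact: ler_normD.
    move: hy; rewrite /e; lra.
  - exists k => // n /= hn.
    have [_ h] := hxn n.
    have : n.+1%:R^-1 <= k.+1%:R^-1 :> R.
      by rewrite lef_pV2 ?posrE // ler_nat.
    move=> /le_lt_trans /(_ hk) hue.
    move: h hue; generalize (n.+1%:R^-1 : R) => u.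
    lra.
exists x0; split => // y Cy; apply: (le_trans ax0); by apply: ge_inf => //; exists y.
Qed.
Lemma sc_mid (R : realType) (E : normedModType R) (a z w : E) :
  strictly_convex_space E -> `|a - z| = `|a - w| -> z != w ->
  `|a - (2^-1 *: z + 2^-1 *: w)| < `|a - z|.
Proof.
move=> sc hzw nzw.
have [r0|rp] := eqVneq `|a - z| 0.
  exfalso; move: nzw; have := r0; rewrite hzw in r0.
  move/eqP; rewrite normr_eq0 subr_eq0 => /eqP <-.
  by move/eqP: r0; rewrite normr_eq0 subr_eq0 => /eqP <-; rewrite eqxx.
have rpos : 0 < `|a - z| by rewrite lt_def rp normr_ge0.
set r := `|a - z| in hzw rp rpos *.
pose u := r^-1 *: (a - z); pose v := r^-1 *: (a - w).
have nu : `|u| = 1 by rewrite normrZ ger0_norm ?invr_ge0 ?ltW // mulVf.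
have nv : `|v| = 1 by rewrite normrZ ger0_norm ?invr_ge0 ?ltW // -hzw mulVf.
have uv : u != v.
  apply: contra nzw => /eqP /(congr1 (fun p => r *: p)).
  by rewrite !scalerA mulfV // !scale1r => /addrI /oppr_inj ->.
have := sc u v nu nv uv.
have h2 : (2^-1 + 2^-1 : R) = 1 by lra.
have ha : a = 2^-1 *: a + 2^-1 *: a by rewrite -scalerDl h2 scale1r.
have -> : a - (2^-1 *: z + 2^-1 *: w) = r *: (2^-1 *: (u + v)).
  rewrite {1}ha opprD addrACA -!scalerBr -scalerDr.
  rewrite scalerA mulrC -scalerA scalerDr /u /v !scalerA.
  by rewrite [RHS]scalerDr !scalerA -!mulrA mulfV // mulr1.
move=> h; rewrite normrZ ger0_norm ?ltW //.
by rewrite -[X in _ < X]mulr1 ltr_pM2l.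
Qed.

Theorem proposition3p4 (R : realType) (E : completeNormedModType R)
  (C : set E) (S : Type) (op : S -> S -> S) (T : S -> E -> E) :
  reflexive_space E -> strictly_convex_space E ->
  closed C -> convex_subset C ->
  (forall s t u : S, op s (op t u) = op (op s t) u) ->
  (forall s x, C x -> C (T s x)) ->
  (forall s t x, C x -> T (op s t) x = T s (T t x)) ->
  (forall s x y, C x -> C y -> `|T s x - T s y| <= `|x - y|) ->
  ((exists C0 : set E,
      [/\ C0 !=set0, C0 `<=` C, closed C0, convex_subset C0 &
          (forall s x, C0 x -> C0 (T s x))] /\
      attractive_points T C0 !=set0)
   <-> (exists x, C x /\ forall s, T s x = x)).
Proof.
move=> refl sc cC convC _ _ _ _; split.
- move=> [C0 [[C0n C0C cC0 convC0 inv] [a ha]]].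
  have [z [Cz zmin]] := nearest_point a refl C0n cC0 convC0.
  exists z; split; first exact: C0C.
  move=> s; apply/eqP; apply: contraT => nz.
  have Tz := inv s z Cz.
  have e : `|a - z| = `|a - T s z|.
    by apply/eqP; rewrite eq_le zmin // ha.
  have nz' : z != T s z by rewrite eq_sym.
  have lt := sc_mid sc e nz'.
  have h12 : (1 - 2^-1 : R) = 2^-1 by lra.
  have h0 : (0 : R) <= 2^-1 by rewrite invr_ge0.
  have h1 : (2^-1 : R) <= 1 by lra.
  have Cm := convC0 z (T s z) (2^-1) Cz Tz h0 h1.
  rewrite h12 in Cm.
  have := zmin _ Cm.
  by rewrite leNgt lt.
- move=> [x [Cx fx]].
  exists [set x]; split.
  + split => //.
    * by exists x.
    * by move=> y ->.
    * exact/accessible_closed_set1/hausdorff_accessible/norm_hausdorff.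
    * by move=> y w t -> -> _ _; rewrite -scalerDl addrC subrK scale1r.
    * by move=> s y ->; rewrite fx.
  + by exists x => y s ->; rewrite fx.
Qed.
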